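(* Let $K\in\mathbb{N}$ and let $\mathcal{P}$ be a family of probability density functions on $\mathbb{R}^K$ such that every $p\in\mathcal{P}$ has finite differential entropy $h(p) := -\int p(\mathbf{x})\log p(\mathbf{x})\,\mathrm{d}\mathbf{x}\in\mathbb{R}$. Assume that $\mathcal{P}$ is convex (for all $\alpha\in[0,1]$ and $p,q\in\mathcal{P}$ we have $\alpha p+(1-\alpha)q\in\mathcal{P}$) and that $\sup_{q\in\mathcal{P}}|h(q)|=\infty$. Fix a sample size $N\in\mathbb{N}$ and an arbitrary (measurable) estimator $\hat h\colon(\mathbb{R}^K)^N\to\mathbb{R}$. Then for any pair of constants $C,\delta>0$ there exists a continuous random vector $\mathbf{x}\sim p\in\mathcal{P}$ such that, with $\mathcal{D}=(\mathbf{x}_1,\dots,\mathbf{x}_N)$ consisting of $N$ i.i.d. copies of $\mathbf{x}$, \[ \Pr\big(|h(p)-\hat h(\mathcal{D})|\le C\big)\le\delta . \]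
   Context: Differential entropy of a density $p$ on $\mathbb{R}^K$ is $h(p)=-\int p\log p\,\mathrm{d}\lambda^K$, where $\lambda^K$ is Lebesgue measure. *)

(* Defs.v *)
From HB Require Import structures.
From mathcomp Require Import all_boot all_order all_algebra.
From mathcomp Require Import all_classical all_reals all_analysis.
Set Implicit Arguments. Unset Strict Implicit. Unset Printing Implicit Defensive.
Import Order.TTheory GRing.Theory Num.Theory.
Local Open Scope classical_set_scope.
Local Open Scope ring_scope.

Fixpoint pow_mT d (T : measurableType d) (n : nat)
  : {d' : measure_display & measurableType d'} :=
  match n with
  | O => existT (fun d' => measurableType d') _ (unit : measurableType _)
  | S k => existT (fun d' => measurableType d') _
            ((T * projT2 (pow_mT T k))%type : measurableType _)
  end.

Definition powT d (T : measurableType d) (n : nat) := projT2 (pow_mT T n).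

Fixpoint pow_meas d (T : measurableType d) (R : realType)
  (mu : set T -> \bar R) (n : nat) : set (powT T n) -> \bar R :=
  match n as n0 return set (powT T n0) -> \bar R with
  | O => (@dirac _ unit tt R : set unit -> \bar R)
  | S k => (mu \x @pow_meas d T R mu k)%E
  end.
Arguments pow_meas {d T R} mu n.

Definition RK (R : realType) (K : nat) := powT (measurableTypeR R) K.
Definition lebK (R : realType) (K : nat) : set (RK R K) -> \bar R :=
  pow_meas (@lebesgue_measure R) K.
Arguments lebK R K : clear implicits.

Definition is_pdf (R : realType) (K : nat) (p : RK R K -> R) : Prop :=
  [/\ measurable_fun setT p, (forall x, 0 <= p x)
    & (\int[lebK R K]_x (p x)%:E = 1)%E].

(* the integral defining the differential entropy exists and is finite
   (ln 0 = 0 in MathComp-Analysis, so 0 log 0 = 0) *)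
Definition finite_entropy (R : realType) (K : nat) (p : RK R K -> R) : Prop :=
  (lebK R K).-integrable setT (fun x => (p x * ln (p x))%:E).

Definition diff_entropy (R : realType) (K : nat) (p : RK R K -> R) : R :=
  - fine (\int[lebK R K]_x (p x * ln (p x))%:E)%E.

Definition pdf_measure (R : realType) (K : nat) (p : RK R K -> R)
  : set (RK R K) -> \bar R :=
  fun A => (\int[lebK R K]_(x in A) (p x)%:E)%E.

Definition convex_family (R : realType) (K : nat) (P : set (RK R K -> R)) :=
  forall (a : R) p q, 0 <= a <= 1 -> P p -> P q ->
    P (fun x => a * p x + (1 - a) * q x).

(* Main.v *)
Require Import Defs.
From HB Require Import structures.
From mathcomp Require Import all_boot all_order all_algebra.
From mathcomp Require Import all_classical all_reals all_analysis.
From mathcomp Require Import measurable_realfun.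
From mathcomp Require Import lra.
Import Order.TTheory GRing.Theory Num.Theory.
Local Open Scope classical_set_scope.
Local Open Scope ring_scope.

Section lprod.
Local Open Scope ereal_scope.
Context d1 d2 (T1 : measurableType d1) (T2 : measurableType d2) (R : realType).
Variable m1 : {sigma_finite_measure set T1 -> \bar R}.
Variable m2 : {sigma_finite_measure set T2 -> \bar R}.

Definition lprod : set (T1 * T2)%type -> \bar R := (m1 \x m2).
HB.instance Definition _ := Measure.copy lprod (m1 \x m2).

Lemma lprod_sigma_finite : sigma_finite setT lprod.
Proof.
have /sigma_finiteP[F [TF ndF Foo]] := sigma_finiteT m1.
have /sigma_finiteP[G [TG ndG Goo]] := sigma_finiteT m2.
exists (fun n => F n `*` G n).
 rewrite -setXTT TF TG predeqE => -[x y]; split.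
    move=> [/= [n _ Fnx] [k _ Gky]]; exists (maxn n k) => //; split.
    - by move: x Fnx; exact/subsetPset/ndF/leq_maxl.
    - by move: y Gky; exact/subsetPset/ndG/leq_maxr.
  by move=> [n _ []/= ? ?]; split; exists n.
move=> k; have [? ?] := Foo k; have [? ?] := Goo k.
split; first exact: measurableX.
by rewrite /lprod product_measure1E// lte_mul_pinfty// ge0_fin_numE.
Qed.

HB.instance Definition _ := Measure_isSigmaFinite.Build _ _ _ lprod
  lprod_sigma_finite.
End lprod.
Arguments lprod {d1 d2 T1 T2 R}.

Section powers.
Context d (T : measurableType d) (R : realType).
Fixpoint powL (mu : {sigma_finite_measure set T -> \bar R}) (n : nat) :
  {sigma_finite_measure set (powT T n) -> \bar R} :=
  match n as n0 return {sigma_finite_measure set (powT T n0) -> \bar R} with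
  | O => (@dirac _ unit tt R : {sigma_finite_measure set unit -> \bar R})
  | S k => (lprod mu (powL mu k) : {sigma_finite_measure set (T * powT T k)%type -> \bar R})
  end.
Lemma powLE (mu : {sigma_finite_measure set T -> \bar R}) n : pow_meas mu n = powL mu n.
Proof. by elim: n => //= n ->. Qed.

Fixpoint powP (mu : probability T R) (n : nat) : probability (powT T n) R :=
  match n as n0 return probability (powT T n0) R with
  | O => (@dirac _ unit tt R : probability unit R)
  | S k => ((mu \x powP mu k)%E : probability (T * powT T k)%type R)
  end.
Lemma powPE (mu : probability T R) n : pow_meas mu n = powP mu n.
Proof. by elim: n => //= n ->. Qed.
End powers.
Arguments powP {d T R}.
Arguments powL {d T R}.

Section mix.
Local Open Scope ereal_scope.
Context d (T : measurableType d) (R : realType).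

Lemma probT (P : probability T R) : (P : {measure set T -> \bar R}) [set: T] = 1.
Proof. exact: probability_setT. Qed.

Lemma mix_pow (mu nu lam : probability T R) (e : R) (e0 : (0 <= e)%R) (e1 : (e <= 1)%R)
  (Hl : forall A, measurable A -> lam A = e%:E * nu A + (1-e)%:E * mu A) n
  (A : set (powT T n)) (mA : measurable A) :
  powP lam n A <= powP mu n A + (n%:R * e)%:E.
Proof.
elim: n A mA => [|n IH] A mA.
  by rewrite mul0r adde0.
rewrite /= /product_measure1 /=.
set g := (powP mu n) \o xsection A.
have mg : measurable_fun [set: T] (g : T -> \bar R).
  exact: (measurable_fun_xsection (powP mu n) mA).
have g0 x : 0 <= g x by [].
have g1 x : g x <= 1.
  by apply: probability_le1; exact: measurable_xsection.
apply: (@le_trans _ _ (\int[lam]_x (g x + (n%:R * e)%:E))).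
  apply: ge0_le_integral => //.
  - exact: (measurable_fun_xsection (powP lam n) mA).
  - by apply: emeasurable_funD => //; exact: measurable_cst.
  - move=> x _; apply: IH; exact: measurable_xsection.
rewrite ge0_integralD//; last first.
  by move=> x _; rewrite lee_fin mulr_ge0.
rewrite integral_cst// probT mule1.
have e1' : (0 <= 1 - e)%R by rewrite subr_ge0.
have -> : \int[lam]_x g x = \int[measure_add (mscale (NngNum e0) nu)
      (mscale (NngNum e1') mu)]_x g x.
  apply: eq_measure_integral => B mB _.
  apply: eq_trans (Hl B mB) _.
  by rewrite /= /msum 2!big_ord_recl/= big_ord0 adde0.
rewrite ge0_integral_measure_add// !ge0_integral_mscale//=.
have : \int[nu]_x g x <= 1.
  apply: (@le_trans _ _ (\int[nu]_x (cst 1 x))).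
    by apply: ge0_le_integral => //; exact: measurable_cst.
  by rewrite integral_cst// probT mule1.
have : 0 <= \int[nu]_x g x by apply: integral_ge0.
have : \int[mu]_x g x <= 1.
  apply: (@le_trans _ _ (\int[mu]_x (cst 1 x))).
    by apply: ge0_le_integral => //; exact: measurable_cst.
  by rewrite integral_cst// probT mule1.
have : 0 <= \int[mu]_x g x by apply: integral_ge0.
move: (\int[mu]_x g x) (\int[nu]_x g x) => [a| |] [b| |] //=.
- rewrite !lee_fin => a0 a1 b0 b1.
  rewrite -natr1; nra.
Qed.
End mix.

Section tail.
Local Open Scope ereal_scope.
Context d (T : measurableType d) (R : realType).

Lemma tail_small (P : probability T R) (g : T -> R) (mg : measurable_fun setT g)
  (eta : R) (eta0 : (0 < eta)%R) :
  exists M : R, forall A, measurable A -> A `<=` [set x | (M <= `|g x|)%R] ->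
    P A <= eta%:E.
Proof.
pose F (n : nat) := [set x | (n%:R <= `|g x|)%R].
have mh : measurable_fun setT (fun x => `|g x|)%R.
  apply: (@measurableT_comp _ _ _ _ _ _ (@Num.norm _ R)) => //; exact: normr_measurable.
have mF n : measurable (F n).
  have -> : F n = (fun x => `|g x|)%R @^-1` `[n%:R, +oo[.
    by apply/seteqP; split => x /=; rewrite in_itv /= andbT.
  by rewrite -[X in measurable X]setTI; apply: mh => //; exact: measurable_itv.
have Fcap : \bigcap_n F n = set0.
  apply/seteqP; split => x // Hx.
  have := Hx (Num.truncn `|g x|%R).+1 I; rewrite /F /= => h1.
  have := Num.Theory.truncnS_gt `|g x|%R.
  by move=> h2; move: (lt_le_trans h2 h1); rewrite ltxx.
have ni : nonincreasing_seq F.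
  move=> m n mn; apply/subsetPset => x /=; apply: le_trans; by rewrite ler_nat.
have := nonincreasing_cvg_mu (mu := P) _ mF _ ni.
rewrite Fcap measure0 => /(_ _ measurable0) h.
have {}h := h (le_lt_trans (probability_le1 P (mF 0%N)) (ltry _)).
have [n Hn] : exists n, P (F n) <= eta%:E.
  apply: contrapT => /forallNP H.
  have : eta%:E <= 0.
    apply: (cvge_to_ge h); apply: nearW => n /=.
    by apply/ltW; rewrite ltNge; apply/negP; exact: H.
  by rewrite lee_fin leNgt eta0.
exists n%:R => A mA AF; apply: le_trans Hn.
by apply: le_measure => //; rewrite inE.
Qed.
End tail.

Section dens.
Local Open Scope ereal_scope.
Context d (T : measurableType d) (R : realType) (L : {measure set T -> \bar R}).
Context (f : T -> R) (mf : measurable_fun setT f) (f0 : forall x, (0 <= f x)%R)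
  (f1 : \int[L]_x (f x)%:E = 1).

Definition dens (_ : measurable_fun setT f) (_ : forall x, (0 <= f x)%R)
  (_ : \int[L]_x (f x)%:E = 1) : set T -> \bar R :=
  fun A => \int[L]_(x in A) (f x)%:E.

Let dens0 : dens mf f0 f1 set0 = 0.
Proof. by rewrite /dens integral_set0. Qed.

Let dens_ge0 A : 0 <= dens mf f0 f1 A.
Proof. by apply: integral_ge0 => x _; rewrite lee_fin. Qed.

Let dens_sa : semi_sigma_additive (dens mf f0 f1).
Proof.
move=> /= F mF tF mUF; rewrite /dens; apply: cvg_toP.
  apply: ereal_nondecreasing_is_cvgn => m n mn.
  apply: lee_sum_nneg_natr => // k _ _; apply: integral_ge0 => /= x Fkx.
  by rewrite lee_fin.
rewrite ge0_integral_bigcup//=.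
- apply/measurable_funTS/measurableT_comp => //.
- by move=> x _; rewrite lee_fin.
Qed.

HB.instance Definition _ := isMeasure.Build _ _ _ (dens mf f0 f1)
  dens0 dens_ge0 dens_sa.

Let densT : dens mf f0 f1 setT = 1.
Proof. exact: f1. Qed.

HB.instance Definition _ := Measure_isProbability.Build _ _ _ (dens mf f0 f1) densT.

Definition densP : probability T R := dens mf f0 f1.
End dens.

Section pointwise.
Context (R : realType).
Implicit Types x y z m e : R.

Lemma gibbs z m : 0 <= z -> 0 < m -> z * ln m - z * ln z <= m - z.
Proof.
rewrite le_eqVlt => /orP[/eqP <-|z0] m0; first by rewrite !mul0r !subr0 ltW.
have h : ln m - ln z <= m / z - 1.
  have -> : ln m - ln z = ln (1 + (m / z - 1)).
    by rewrite (addrC 1) subrK ln_div ?posrE.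
  apply: le_ln1Dx; have : 0 < m / z by rewrite divr_gt0. lra.
have : z * (ln m - ln z) <= z * (m / z - 1) by rewrite ler_pM2l.
by rewrite !mulrBr mulr1 mulrCA mulfV ?gt_eqF// mulr1.
Qed.

Lemma ent_conv x y e : 0 <= x -> 0 <= y -> 0 < e < 1 ->
  (e * x + (1 - e) * y) * ln (e * x + (1 - e) * y) <=
  e * (x * ln x) + (1 - e) * (y * ln y).
Proof.
move=> x0 y0 /andP[e0 e1].
set m := e * x + (1 - e) * y.
have [m0|m0] : m = 0 \/ 0 < m.
  rewrite /m; case: (lerP (e * x + (1 - e) * y) 0) => h; [left; nra|by right].
  have -> : x = 0 by rewrite /m in m0; nra.
  have -> : y = 0 by rewrite /m in m0; nra.
  by rewrite m0 !mul0r !mulr0 addr0.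
have g1 := gibbs x m x0 m0; have g2 := gibbs y m y0 m0.
rewrite /m in g1 g2 *; nra.
Qed.

Lemma ent_mono x y e : 0 <= x -> 0 <= y -> 0 < e < 1 ->
  e * (x * ln x) + (1 - e) * (y * ln y) + (e * ln e) * x + ((1 - e) * ln (1 - e)) * y
  <= (e * x + (1 - e) * y) * ln (e * x + (1 - e) * y).
Proof.
move=> x0 y0 /andP[e0 e1].
have e1' : 0 < 1 - e by rewrite subr_gt0.
set m := e * x + (1 - e) * y.
have hx : x * (ln e + ln x) <= x * ln m.
  move: x0; rewrite le_eqVlt => /orP[/eqP <-|x0]; first by rewrite !mul0r.
  rewrite ler_pM2l// -lnM ?posrE// ler_ln ?posrE ?mulr_gt0//; last by rewrite /m; nra.
  by rewrite /m; nra.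
have hy : y * (ln (1 - e) + ln y) <= y * ln m.
  move: y0; rewrite le_eqVlt => /orP[/eqP <-|y0]; first by rewrite !mul0r.
  rewrite ler_pM2l// -lnM ?posrE// ler_ln ?posrE ?mulr_gt0//; last by rewrite /m; nra.
  by rewrite /m; nra.
rewrite /m in hx hy *; nra.
Qed.
End pointwise.

Section ent.
Context d (T : measurableType d) (R : realType) (L : {measure set T -> \bar R}).

Lemma int_pdf (f : T -> R) : measurable_fun setT f -> (forall x, 0 <= f x) ->
  (\int[L]_x (f x)%:E = 1)%E -> L.-integrable setT (EFin \o f).
Proof.
move=> mf f0 f1; apply/integrableP; split; first exact/measurable_EFinP.
under eq_integral => x _ do rewrite /comp gee0_abs ?lee_fin//.
by rewrite f1 ltry.
Qed.

Lemma intZD (f g : T -> R) a b : L.-integrable setT (EFin \o f) ->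
  L.-integrable setT (EFin \o g) ->
  L.-integrable setT (EFin \o (fun x => a * f x + b * g x)).
Proof.
move=> If Ig.
apply: eq_integrable (integrableD _ (integrableZl _ a If) (integrableZl _ b Ig)) => //.
Qed.

Lemma RintZD (f g : T -> R) a b : L.-integrable setT (EFin \o f) ->
  L.-integrable setT (EFin \o g) ->
  \int[L]_x (a * f x + b * g x) = a * \int[L]_x f x + b * \int[L]_x g x.
Proof.
move=> If Ig.
rewrite RintegralD//; last 2 first.
- by apply: eq_integrable (integrableZl _ a If) => // x _ /=; rewrite -EFinM.
- by apply: eq_integrable (integrableZl _ b Ig) => // x _ /=; rewrite -EFinM.
by rewrite !RintegralZl.
Qed.

Lemma ent_mix (p q : T -> R) (e : R) (e0 : 0 < e) (e1 : e < 1)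
  (pm : measurable_fun setT p) (qm : measurable_fun setT q)
  (p0 : forall x, 0 <= p x) (q0 : forall x, 0 <= q x)
  (p1 : (\int[L]_x (p x)%:E = 1)%E) (q1 : (\int[L]_x (q x)%:E = 1)%E)
  (ip : L.-integrable setT (fun x => (p x * ln (p x))%:E))
  (iq : L.-integrable setT (fun x => (q x * ln (q x))%:E))
  (im : L.-integrable setT (fun x => ((e * p x + (1 - e) * q x) *
           ln (e * p x + (1 - e) * q x))%:E)) :
  let H f := - (\int[L]_x (f x * ln (f x))) in
  e * H p + (1 - e) * H q <= H (fun x => e * p x + (1 - e) * q x) /\
  H (fun x => e * p x + (1 - e) * q x) <=
    e * H p + (1 - e) * H q + (- (e * ln e) - (1 - e) * ln (1 - e)).
Proof.
move=> H; rewrite /H.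
have Ip := int_pdf p pm p0 p1; have Iq := int_pdf q qm q0 q1.
have Rp : \int[L]_x p x = 1 by rewrite /Rintegral p1.
have Rq : \int[L]_x q x = 1 by rewrite /Rintegral q1.
have IF1 := intZD _ _ e (1 - e) ip iq.
have RF1 := RintZD _ _ e (1 - e) ip iq.
have IF2 := intZD _ _ (e * ln e) ((1 - e) * ln (1 - e)) Ip Iq.
have RF2 := RintZD _ _ (e * ln e) ((1 - e) * ln (1 - e)) Ip Iq.
have e01 : 0 < e < 1 by rewrite e0 e1.
split.
  have : \int[L]_x ((e * p x + (1 - e) * q x) * ln (e * p x + (1 - e) * q x))
      <= \int[L]_x (e * (p x * ln (p x)) + (1 - e) * (q x * ln (q x))).
    apply: le_Rintegral => // x _; exact: ent_conv.
  rewrite RF1; lra.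
have : \int[L]_x ((e * (p x * ln (p x)) + (1 - e) * (q x * ln (q x))) +
                  ((e * ln e) * p x + ((1 - e) * ln (1 - e)) * q x))
    <= \int[L]_x ((e * p x + (1 - e) * q x) * ln (e * p x + (1 - e) * q x)).
  apply: le_Rintegral => //.
    by apply: eq_integrable (integrableD _ IF1 IF2) => // x _ /=; rewrite -EFinD.
  by move=> x _; rewrite addrA; exact: ent_mono.
rewrite RintegralD// RF1 RF2 Rp Rq; lra.
Qed.
End ent.

Theorem proposition1 (R : realType) (K : nat) (P : set (RK R K -> R))
  (HP : forall p, P p -> is_pdf p /\ finite_entropy p)
  (Hconv : convex_family P)
  (Hsup : ereal_sup [set (`|diff_entropy q|)%:E | q in P] = +oo%E)
  (N : nat) (hhat : powT (RK R K) N -> R) (mhhat : measurable_fun setT hhat) :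
  forall C delta : R, 0 < C -> 0 < delta ->
  exists p, P p /\
    (pow_meas (pdf_measure p) N [set D : powT (RK R K) N | (`|diff_entropy p - hhat D| <= C)%R]
       <= delta%:E)%E.
Proof.
move=> C delta C0 d0.
pose Lm := powL (@lebesgue_measure R) K.
have LE : lebK R K = Lm := @powLE _ _ _ (@lebesgue_measure R) K.
have hE f : diff_entropy f = - (\int[Lm]_x (f x * ln (f x))).
  by rewrite /diff_entropy LE.
have [p0 Pp0] : exists p0, P p0.
  apply: contrapT => /forallNP np; move: Hsup.
  rewrite (_ : [set _ | q in P] = set0) ?ereal_sup0//.
  by apply/seteqP; split=> x //= [q Pq _]; exact: (np q Pq).
have [[mp0 p00 p01] ip0] := HP _ Pp0.
rewrite /finite_entropy LE in ip0; rewrite LE in p01.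
pose n1 : R := N.+1%:R.
have n10 : 0 < n1 by rewrite /n1 ltr0Sn.
have n1E : n1 = N%:R + 1 by rewrite /n1 -natr1.
have N0 : (0 : R) <= N%:R by rewrite ler0n.
pose X : R := 2 * n1 * (1 + delta).
have X0 : 0 < X by rewrite /X; nra.
pose e := delta / X.
have he : e * X = delta by rewrite /e divfK// gt_eqF.
have e0 : 0 < e by rewrite /e divr_gt0.
have e1 : e < 1.
  rewrite /e ltr_pdivrMr// mul1r /X n1E; nra.
have eN : N%:R * e <= delta / 2.
  have h1 : 0 <= N%:R * e * delta.
    by apply: mulr_ge0; [apply: mulr_ge0 => //; exact: ltW | exact: ltW].
  have h2 : 0 <= e * delta by apply: mulr_ge0; exact: ltW.
  rewrite /X n1E in he; nra.
pose mu0 := densP _ _ _ Lm p0 mp0 p00 p01.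
have [M HM] := tail_small _ _ _ (powP mu0 N) hhat mhhat (delta / 2) (divr_gt0 d0 (ltr0Sn _ 1)).
pose hb := - (e * ln e) - (1 - e) * ln (1 - e).
pose B := (`|M| + C + `|(1 - e) * diff_entropy p0| + `|hb| + 1) / e.
have [q Pq hq] : exists2 q, P q & B < `|diff_entropy q|.
  apply: contrapT => nq.
  have : (ereal_sup [set (`|diff_entropy q|)%:E | q in P] <= B%:E)%E.
    apply: ge_ereal_sup => _ [q Pq <-]; rewrite lee_fin leNgt; apply/negP => h.
    by apply: nq; exists q.
  by rewrite Hsup leNgt ltry.
pose p := fun x => e * q x + (1 - e) * p0 x.
have Pp : P p by apply: Hconv => //; rewrite (ltW e0) (ltW e1).
have [[mq q0 q1] iq] := HP _ Pq.
have [[mp pp0 pp1] ip] := HP _ Pp.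
rewrite /finite_entropy LE in iq ip; rewrite LE in q1 pp1.
have [lo hi] := ent_mix _ _ _ Lm q p0 e e0 e1 mq mp0 q0 p00 q1 p01 iq ip0 ip.
have hpE : diff_entropy p = - (\int[Lm]_x ((e * q x + (1 - e) * p0 x) *
   ln (e * q x + (1 - e) * p0 x))) := hE p.
move: lo hi; rewrite /= -hpE -hE -hE -/hb => lo hi.
have hpB : `|M| + C <= `|diff_entropy p|.
  have eB : e * B = `|M| + C + `|(1 - e) * diff_entropy p0| + `|hb| + 1.
    by rewrite /B mulrC divfK// gt_eqF.
  rewrite ler_normr.
  have : e * B < e * `|diff_entropy q| by rewrite ltr_pM2l.
  have := ler_norm ((1 - e) * diff_entropy p0).
  have := ler_norm (- ((1 - e) * diff_entropy p0)); rewrite normrN.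
  have := ler_norm hb; have := ler_norm (- hb); rewrite normrN.
  have := normr_ge0 M.
  case: (lerP 0 (diff_entropy q)) => hq0.
    by rewrite (ger0_norm hq0) => *; apply/orP; left; nra.
  by rewrite (ltr0_norm hq0) => *; apply/orP; right; nra.
have mA : measurable [set D : powT (RK R K) N | `|diff_entropy p - hhat D| <= C].
  have -> : [set D : powT (RK R K) N | `|diff_entropy p - hhat D| <= C] =
      hhat @^-1` `[diff_entropy p - C, diff_entropy p + C].
    by apply/seteqP; split => D /=; rewrite in_itv /= ler_distlC.
  rewrite -[X in measurable X]setTI; exact: mhhat.
exists p; split => //.
have -> : pdf_measure p = densP _ _ _ Lm p mp pp0 pp1 by rewrite /pdf_measure LE.
rewrite powPE.
have Hl : forall Y, measurable Y -> (densP _ _ _ Lm p mp pp0 pp1 Y =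
    e%:E * densP _ _ _ Lm q mq q0 q1 Y + (1 - e)%:E * mu0 Y)%E.
  move=> Y mY; rewrite /= /dens.
  rewrite (eq_integral (fun x => e%:E * (q x)%:E + (1 - e)%:E * (p0 x)%:E)%E); last first.
    by move=> x _; rewrite /p EFinD !EFinM.
  have e1' : 0 <= 1 - e by rewrite subr_ge0 ltW.
  rewrite ge0_integralD//; last 4 first.
  - by move=> x _; rewrite -EFinM lee_fin mulr_ge0// ltW.
  - by apply: measurable_funeM; apply/measurable_EFinP; exact: measurable_funTS.
  - by move=> x _; rewrite -EFinM lee_fin mulr_ge0.
  - by apply: measurable_funeM; apply/measurable_EFinP; exact: measurable_funTS.
  rewrite !ge0_integralZl//.
  - by apply/measurable_EFinP; exact: measurable_funTS.
  - by move=> x _; rewrite lee_fin.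
  - by apply/measurable_EFinP; exact: measurable_funTS.
  - by move=> x _; rewrite lee_fin.
  - by rewrite lee_fin ltW.
have Hmix := mix_pow _ _ _ mu0 (densP _ _ _ Lm q mq q0 q1)
  (densP _ _ _ Lm p mp pp0 pp1) e (ltW e0) (ltW e1) Hl N _ mA.
have sub : [set D : powT (RK R K) N | `|diff_entropy p - hhat D| <= C] `<=`
    [set x | M <= `|hhat x|].
  move=> D /=; rewrite ler_distlC => /andP[h1 h2].
  move: hpB; have := ler_norm (hhat D); have := ler_norm (- hhat D); rewrite normrN.
  have := ler_norm M.
  case: (lerP 0 (diff_entropy p)) => hp0.
    by rewrite (ger0_norm hp0) => *; lra.
  by rewrite (ltr0_norm hp0) => *; lra.
have HA := HM _ mA sub.
apply: le_trans Hmix _.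
rewrite [X in (_ <= X%:E)%E](splitr delta) EFinD; apply: leeD => //.
Qed.
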